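(* Let $0\le B<B_n$, where $B_n=\dfrac{4\sqrt3}{\sqrt{169+38\sqrt{19}}}$. Put $$Z(r)=2r-3-B^2r^2\Big(\tfrac32 r-\tfrac54\Big),\qquad b(r)=1+\tfrac{B^2r^2}{4},$$ let $(r_1,r_2)=\{r>1: Z(r)>0\}$ (with $r_2=+\infty$ when $B=0$), and for $r_c\in(r_1,r_2)$ define $$L(r_c)=\frac{r_c}{b}\sqrt{\frac{4(b-1)(r_c-1)+b}{Z(r_c)}},\qquad E(r_c)=b\,(r_c-1)\sqrt{\frac{4-B^2r_c^2}{2r_cZ(r_c)}},\qquad b=b(r_c).$$ For $L=L(r_c)$, $E=E(r_c)$ the point $(p_r,p_\theta,r,\theta)=(0,0,r_c,\pi/2)$ is a fixed point of the Hamiltonian system with Hamiltonian $$H=\frac{\Gamma}{2\Lambda^2}p_r^2+\frac{p_\theta^2}{2r^2\Lambda^2}+\frac{L^2\Lambda^2}{2r^2\sin^2\theta}-\frac{E^2}{2\Lambda^2\Gamma},\quad \Lambda=1+\frac{B^2}{4}r^2\sin^2\theta,\quad \Gamma=1-\frac1r,$$ lying on the level set $H=-\tfrac12$. Let $$N(r)=64(r-3)+(4Br)^2(16r^2-39r+21)-4(Br)^4(24r^2-51r+25)+(Br)^6(24r^2-37r+15).$$ Then there is $r_*\in(r_1,r_2)$ with $N(r_* )=0$ such that: for $r_c\in(r_1,r_* )$ this fixed point is unstable, of saddle-center type, and for $r_c\in(r_*,r_2)$ it is stable, of center-center type (the effective potential has a strict minimum there). In particular $r_*=3$ when $B=0$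.
   Context: This is the reduced Hamiltonian system (canonical variables $(p_r,p_\theta,r,\theta)$, $r>1$, $0<\theta<\pi$) for time-like geodesics of neutral particles in the Schwarzschild–Melvin spacetime in dimensionless units (horizon at $r=1$), obtained by eliminating the cyclic coordinates $t,\varphi$ with conserved energy $E>0$ and angular momentum $L>0$; physical trajectories lie on $H=-1/2$. Fixed points with $\theta=\pi/2$ correspond to circular orbits in the equatorial plane. The effective potential is the $p$-independent part of $H$. *)

(* Defs.v *)
From Stdlib Require Import Reals.
From Coquelicot Require Import Coquelicot.
From mathcomp Require Import all_boot all_algebra.
From mathcomp Require Import Rstruct.

Set Implicit Arguments.
Unset Strict Implicit.
Unset Printing Implicit Defensive.

Local Open Scope R_scope.

Definition Lam (B r th : R) : R := 1 + B ^ 2 / 4 * r ^ 2 * (sin th) ^ 2.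
Definition Gam (r : R) : R := 1 - 1 / r.

(* Phase-space points are functions 'I_4 -> R with coordinates
   index 0 = p_r, 1 = p_theta, 2 = r, 3 = theta. *)
Definition Ham (B L E : R) (v : 'I_4 -> R) : R :=
  let pr := v (inord 0) in let pth := v (inord 1) in
  let r := v (inord 2) in let th := v (inord 3) in
  Gam r / (2 * (Lam B r th) ^ 2) * pr ^ 2
  + pth ^ 2 / (2 * r ^ 2 * (Lam B r th) ^ 2)
  + L ^ 2 * (Lam B r th) ^ 2 / (2 * r ^ 2 * (sin th) ^ 2)
  - E ^ 2 / (2 * (Lam B r th) ^ 2 * Gam r).

Definition Veff (B L E r th : R) : R :=
  L ^ 2 * (Lam B r th) ^ 2 / (2 * r ^ 2 * (sin th) ^ 2)
  - E ^ 2 / (2 * (Lam B r th) ^ 2 * Gam r).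

Definition Zf (B r : R) : R := 2 * r - 3 - B ^ 2 * r ^ 2 * (3 / 2 * r - 5 / 4).
Definition bf (B r : R) : R := 1 + B ^ 2 * r ^ 2 / 4.

Definition Lc (B rc : R) : R :=
  rc / bf B rc * sqrt ((4 * (bf B rc - 1) * (rc - 1) + bf B rc) / Zf B rc).
Definition Ec (B rc : R) : R :=
  bf B rc * (rc - 1) * sqrt ((4 - B ^ 2 * rc ^ 2) / (2 * rc * Zf B rc)).

Definition Nf (B r : R) : R :=
  64 * (r - 3) + (4 * B * r) ^ 2 * (16 * r ^ 2 - 39 * r + 21)
  - 4 * (B * r) ^ 4 * (24 * r ^ 2 - 51 * r + 25)
  + (B * r) ^ 6 * (24 * r ^ 2 - 37 * r + 15).

Definition Bn : R := 4 * sqrt 3 / sqrt (169 + 38 * sqrt 19).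

Definition eq_point (rc : R) : 'I_4 -> R :=
  fun j => if j == inord 2 then rc else if j == inord 3 then PI / 2 else 0.

Definition upd (v : 'I_4 -> R) (i : 'I_4) (x : R) : 'I_4 -> R :=
  fun j => if j == i then x else v j.
Definition pderiv (i : 'I_4) (f : ('I_4 -> R) -> R) (v : 'I_4 -> R) : R :=
  Derive (fun x => f (upd v i x)) (v i).

Definition hessian (f : ('I_4 -> R) -> R) (v : 'I_4 -> R) : 'M[R]_4 :=
  \matrix_(i < 4, j < 4) pderiv i (pderiv j f) v.

(* Hamilton's equations  dp/dt = - dH/dq,  dq/dt = dH/dp  with x = (p, q). *)
Definition Jsymp : 'M[R]_4 :=
  \matrix_(i < 4, j < 4)
    (if (i < 2)%N && (j == (i + 2)%N :> nat) then -1
     else if (2 <= i)%N && ((j + 2)%N == i :> nat) then 1 else 0).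

Definition linearization (f : ('I_4 -> R) -> R) (v : 'I_4 -> R) : 'M[R]_4 :=
  (Jsymp *m hessian f v)%R.

Definition fixed_point (f : ('I_4 -> R) -> R) (v : 'I_4 -> R) : Prop :=
  forall i : 'I_4, pderiv i f v = 0.

(* Saddle-center: eigenvalues +-l (real, l>0) and +-i w (w>0). *)
Definition saddle_center (A : 'M[R]_4) : Prop :=
  exists l w : R, 0 < l /\ 0 < w /\
    char_poly A = (('X ^+ 2 - (l ^ 2)%:P) * ('X ^+ 2 + (w ^ 2)%:P))%R.

(* Center-center: eigenvalues +-i w1, +-i w2 (w1, w2 > 0). *)
Definition center_center (A : 'M[R]_4) : Prop :=
  exists w1 w2 : R, 0 < w1 /\ 0 < w2 /\
    char_poly A = (('X ^+ 2 + (w1 ^ 2)%:P) * ('X ^+ 2 + (w2 ^ 2)%:P))%R.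

Definition strict_local_min (V : R -> R -> R) (r0 th0 : R) : Prop :=
  exists d : R, 0 < d /\ forall r th, Rabs (r - r0) < d -> Rabs (th - th0) < d ->
    (r, th) <> (r0, th0) -> V r0 th0 < V r th.

(* Main.v *)
Require Import Defs.
From Stdlib Require Import Reals.
From Coquelicot Require Import Coquelicot.
From mathcomp Require Import all_boot all_algebra.
From mathcomp Require Import Rstruct.
From Stdlib Require Import Lra Psatz.
Local Open Scope R_scope.

Definition s19 := sqrt 19.
Definition r0 := (8 + s19) / 6.

Lemma s19_sq : s19 * s19 = 19.
Proof. unfold s19; apply sqrt_sqrt; lra. Qed.
Lemma s19_bnd : 4 < s19 < 5.
Proof.
pose proof s19_sq. assert (0 <= s19) by (unfold s19; apply sqrt_pos). nra.
Qed.

Lemma Bn_sq : Bn ^ 2 = 48 / (169 + 38 * s19).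
Proof.
pose proof s19_bnd as Hs.
unfold Bn. fold s19.
assert (h3 : sqrt 3 * sqrt 3 = 3) by (apply sqrt_sqrt; lra).
assert (hX : sqrt (169 + 38 * s19) * sqrt (169 + 38 * s19) = 169 + 38 * s19)
  by (apply sqrt_sqrt; lra).
assert (hX0 : 0 < sqrt (169 + 38 * s19)) by (apply sqrt_lt_R0; lra).
replace ((4 * sqrt 3 / sqrt (169 + 38 * s19)) ^ 2) with
  (16 * (sqrt 3 * sqrt 3) / (sqrt (169 + 38 * s19) * sqrt (169 + 38 * s19)))
  by (field; lra).
rewrite h3 hX. field. lra.
Qed.

Lemma B2_lt B : 0 <= B -> B < Bn -> B ^ 2 * (169 + 38 * s19) < 48.
Proof.
intros h0 h1. pose proof s19_bnd. pose proof Bn_sq.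
assert (B ^ 2 < Bn ^ 2) by nra.
assert (Bn ^ 2 * (169 + 38 * s19) = 48) by (rewrite H0; field; lra).
nra.
Qed.

Lemma Z_r0_pos B : B ^ 2 * (169 + 38 * s19) < 48 -> 0 < Zf B r0.
Proof.
intros h. pose proof s19_bnd. pose proof s19_sq.
assert (e : Zf B r0 = (s19 - 1) / 3 - B ^ 2 * (553 + 131 * s19) / 144).
{ unfold Zf, r0. field_simplify.
  replace (s19 ^ 3) with (19 * s19) by (simpl; nra).
  replace (s19 ^ 2) with 19 by (simpl; nra). field. }
rewrite e.
assert (e2 : 553 + 131 * s19 = (s19 - 1) * (169 + 38 * s19)) by nra.
rewrite e2.
assert (0 <= B^2) by (apply pow2_ge_0).
nra.
Qed.

Lemma Z_cont B : continuity (fun r => Zf B r).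
Proof. unfold Zf. reg. Qed.
Lemma N_cont B : continuity (fun r => Nf B r).
Proof. unfold Nf. reg. Qed.

Lemma Z_factor B r1 r2 : Zf B r1 = 0 -> Zf B r2 = 0 -> r1 <> r2 ->
  forall r, Zf B r = - (3 * B^2 / 2) * (r - r1) * (r - r2) * (r - (5/6 - r1 - r2)).
Proof.
intros h1 h2 hne r.
set (al := 2 + 3/2 * B^2 * (r1*r2 + (r1 + r2) * (5/6 - r1 - r2))).
set (ga := -3 - 3/2 * B^2 * (r1*r2*(5/6 - r1 - r2))).
assert (key : forall x, Zf B x + (3 * B^2 / 2) * (x - r1) * (x - r2) * (x - (5/6 - r1 - r2))
                = al * x + ga).
{ intro x. unfold Zf, al, ga. field. }
pose proof (key r1) as k1. pose proof (key r2) as k2.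
rewrite h1 in k1. rewrite h2 in k2.
assert (e1 : al * (r1 - r2) = 0) by nra.
assert (hal : al = 0).
{ apply Rmult_integral in e1. destruct e1 as [e1|e1]; auto. exfalso; apply hne; lra. }
assert (hga : ga = 0) by (rewrite hal in k1; nra).
pose proof (key r) as kr. rewrite hal hga in kr. lra.
Qed.

Lemma N_on_Z0 B r : Zf B r = 0 ->
  (6*r-5)^3 * Nf B r = 2048 * (r-1)^2 * (2*r-1) * (12*r^2 - 32*r + 15).
Proof.
intros hz.
assert (hw : (B^2*r^2) * (6*r-5) = 4*(2*r-3)) by (unfold Zf in hz; nra).
set (w := (B^2*r^2) * (6*r-5)) in *.
assert (e : (6*r-5)^3 * Nf B r = 64*(r-3)*(6*r-5)^3 + 16*w*(6*r-5)^2*(16*r^2-39*r+21)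
   - 4*w^2*(6*r-5)*(24*r^2-51*r+25) + w^3*(24*r^2-37*r+15)).
{ unfold w, Nf. field. }
rewrite e hw. field.
Qed.

Lemma rD_pos r u : 3/2 < r -> 0 <= u -> u*(6*r-5) < 4*(2*r-3) ->
 0 < 64*r + u*(672 - 1872*r + 1024*r^2) + u^2*(-400 + 1020*r - 576*r^2) + u^3*(90 - 259*r + 192*r^2).
Proof.
intros h1 h2 h3.
assert (hu: u < 4/3) by nra.
assert (a3: 0 < 90 - 259*r + 192*r^2) by nra.
assert (k: 0 <= u*((672 - 1872*r + 1024*r^2) + u*(-400 + 1020*r - 576*r^2))).
{ apply Rmult_le_pos; auto. nra. }
assert (0 <= u^3*(90 - 259*r + 192*r^2)). { apply Rmult_le_pos; [apply pow_le;auto|lra]. }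
nra.
Qed.

Definition Dn B r := (64*r + (B^2*r^2)*(672 - 1872*r + 1024*r^2) + (B^2*r^2)^2*(-400 + 1020*r - 576*r^2)
   + (B^2*r^2)^3*(90 - 259*r + 192*r^2)) / r.

Lemma N_deriv B r : 0 < r -> derivable_pt_lim (Nf B) r (Dn B r).
Proof.
intros hr. apply is_derive_Reals. unfold Nf, Dn.
auto_derive; auto. field. lra.
Qed.

Lemma Dn_pos B r : 1 < r -> 0 < Zf B r -> 0 < Dn B r.
Proof.
intros h1 h2. unfold Dn, Zf in *.
assert (0 <= B^2*r^2) by (apply Rmult_le_pos; apply pow2_ge_0).
assert (hr : 3/2 < r) by nra.
apply Rdiv_lt_0_compat; [|lra].
apply rD_pos; auto. nra.
Qed.

Lemma N_mono B r1 r2 : 1 <= r1 -> (forall r, r1 < r < r2 -> 1 < r /\ 0 < Zf B r) ->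
  forall x y, r1 <= x -> x < y -> y <= r2 -> Nf B x < Nf B y.
Proof.
intros h0 hreg x y hx hxy hy.
destruct (MVT_cor2 (Nf B) (Dn B) x y hxy) as [c [hc1 hc2]].
{ intros c hc. apply N_deriv. lra. }
assert (hc' : r1 < c < r2) by lra.
destruct (hreg c hc') as [h1 h2].
pose proof (Dn_pos B c h1 h2). nra.
Qed.

Lemma sign_part B (hB0: 0 <= B) (hBn: B < Bn) :
  exists (r1 : R) (r2 : Rbar),
    1 <= r1 /\ (B = 0 <-> r2 = p_infty) /\
    (forall r, (1 < r /\ 0 < Zf B r) <-> (r1 < r /\ Rbar_lt r r2)) /\
    exists rs, r1 < rs /\ Rbar_lt rs r2 /\ Nf B rs = 0 /\
      (forall rc, r1 < rc -> rc < rs -> Nf B rc < 0) /\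
      (forall rc, rs < rc -> Rbar_lt rc r2 -> 0 < Nf B rc) /\
      (B = 0 -> rs = 3).
Proof.
destruct (Req_dec B 0) as [hB|hB].
- subst B. exists (3/2). exists p_infty.
  assert (eZ : forall r, Zf 0 r = 2*r - 3) by (intro r; unfold Zf; field).
  assert (eN : forall r, Nf 0 r = 64*(r - 3)) by (intro r; unfold Nf; field).
  split; [lra|]. split; [tauto|]. split.
  { intro r. rewrite eZ. simpl. lra. }
  exists 3. simpl. repeat split; intros; try rewrite eN; try lra.
- assert (hBp : 0 < B) by lra.
  pose proof (B2_lt B hB0 hBn) as hb2.
  pose proof s19_bnd as hs.
  set (be := B^2) in *.
  assert (hbe : 0 < be) by (unfold be; nra).
  assert (hbe1 : be < 1/6) by nra.
  assert (hr0 : 2 < r0 < 3) by (unfold r0; lra).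
  pose proof (Z_r0_pos B hb2) as hZr0.
  assert (hZ32 : Zf B (3/2) < 0) by (unfold Zf; fold be; nra).
  destruct (IVT (fun r => Zf B r) (3/2) r0) as [r1 [hr1 hZr1]].
  { apply Z_cont. } { lra. } { cbv beta; lra. } { cbv beta; lra. }
  assert (hZr1' : Zf B r1 = 0) by lra. clear hZr1.
  assert (hr1' : 3/2 < r1 < r0).
  { split; destruct hr1 as [a b]; apply Rnot_le_lt; intro c;
    [ assert (r1 = 3/2) by lra | assert (r1 = r0) by lra ]; subst r1; lra. }
  set (RR := 2/be + 1).
  assert (hRR : 13 < RR) by (unfold RR; apply Rlt_gt in hbe1;
     assert (2/be > 12) by (apply Rlt_gt; apply (Rmult_lt_reg_r be); [lra|]; field_simplify; lra); lra).
  assert (hZRR : Zf B RR < 0).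
  { unfold Zf; fold be.
    assert (e : be * RR = 2 + be) by (unfold RR; field; lra).
    assert (be * RR^2 * (3/2*RR - 5/4) > (2) * RR * (3/2*RR - 5/4)).
    { replace (be * RR^2 * (3/2*RR - 5/4)) with ((be*RR) * RR * (3/2*RR - 5/4)) by ring.
      rewrite e. nra. }
    nra. }
  destruct (IVT (fun r => - Zf B r) r0 RR) as [r2 [hr2 hZr2]].
  { apply continuity_opp, Z_cont. } { lra. } { cbv beta; lra. } { cbv beta; lra. }
  assert (hr2' : r0 < r2 < RR).
  { split; destruct hr2 as [a b]; apply Rnot_le_lt; intro c;
    [ assert (r2 = r0) by lra | assert (r2 = RR) by lra ]; subst r2; lra. }
  assert (hZr2' : Zf B r2 = 0) by lra. clear hZr2. rename hZr2' into hZr2.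
  pose proof (Z_factor B r1 r2 hZr1' hZr2 ltac:(lra)) as hfac.
  assert (hint : forall r, (1 < r /\ 0 < Zf B r) <-> (r1 < r /\ r < r2)).
  { intro r. rewrite hfac. fold be. split.
    - intros [h1 h2].
      assert (hp : 0 < (r - r1) * (r - r2) * - (r - (5/6 - r1 - r2))) by nra.
      assert (hneg : (r - r1) * (r - r2) < 0) by nra.
      destruct (Rlt_or_le r r1); [nra|]. destruct (Rlt_or_le r r2); nra.
    - intros [h1 h2]. split; [lra|].
      assert ((r - r1) * (r - r2) < 0) by nra.
      assert (0 < r - (5/6 - r1 - r2)) by lra.
      replace (- (3 * be / 2) * (r - r1) * (r - r2) * (r - (5 / 6 - r1 - r2))) with
        ((3 * be / 2) * (- ((r - r1) * (r - r2))) * (r - (5 / 6 - r1 - r2))) by ring.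
      apply Rmult_lt_0_compat; [apply Rmult_lt_0_compat|]; lra. }
  assert (q1 : 12*r1^2 - 32*r1 + 15 < 0).
  { assert (e : 12*r1^2 - 32*r1 + 15 = 12 * (r1 - r0) * (r1 - (8 - s19)/6)).
    { unfold r0. pose proof s19_sq. field_simplify. nra. }
    rewrite e. nra. }
  assert (q2 : 0 < 12*r2^2 - 32*r2 + 15).
  { assert (e : 12*r2^2 - 32*r2 + 15 = 12 * (r2 - r0) * (r2 - (8 - s19)/6)).
    { unfold r0. pose proof s19_sq. field_simplify. nra. }
    rewrite e. nra. }
  assert (hN1 : Nf B r1 < 0).
  { pose proof (N_on_Z0 B r1 hZr1') as e.
    assert (0 < (6*r1-5)^3) by (apply pow_lt; lra).
    assert (0 < 2048 * (r1-1)^2 * (2*r1-1)) by (apply Rmult_lt_0_compat; [|lra];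
       apply Rmult_lt_0_compat; [lra| apply pow_lt; lra]).
    nra. }
  assert (hN2 : 0 < Nf B r2).
  { pose proof (N_on_Z0 B r2 hZr2) as e.
    assert (0 < (6*r2-5)^3) by (apply pow_lt; lra).
    assert (0 < 2048 * (r2-1)^2 * (2*r2-1)) by (apply Rmult_lt_0_compat; [|lra];
       apply Rmult_lt_0_compat; [lra| apply pow_lt; lra]).
    nra. }
  assert (hmono := N_mono B r1 r2 ltac:(lra) (fun r h => proj2 (hint r) h)).
  destruct (IVT (fun r => Nf B r) r1 r2) as [rs [hrs hNrs]].
  { apply N_cont. } { lra. } { exact hN1. } { exact hN2. }
  assert (hrs' : r1 < rs < r2).
  { split; destruct hrs as [a b]; apply Rnot_le_lt; intro c;
    [ assert (rs = r1) by lra | assert (rs = r2) by lra ]; subst rs; lra. }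
  exists r1. exists (Rbar.Finite r2).
  split; [lra|]. split; [split; [intro; lra| discriminate]|].
  split; [ intro r; rewrite hint; simpl; tauto |].
  exists rs. simpl. repeat split; try lra.
  + intros rc h1 h2. rewrite <- hNrs. apply hmono; lra.
  + intros rc h1 h2. rewrite <- hNrs. apply hmono; lra.
Qed.


Definition Vs (B L E r s : R) : R :=
  L ^ 2 * (1 + B ^ 2 / 4 * r ^ 2 * s) ^ 2 / (2 * r ^ 2 * s)
  - E ^ 2 / (2 * (1 + B ^ 2 / 4 * r ^ 2 * s) ^ 2 * Gam r).

Lemma Veff_Vs B L E r th : Veff B L E r th = Vs B L E r ((sin th) ^ 2).
Proof. reflexivity. Qed.

Definition Fr (B L E r s : R) : R :=
  let La := 1 + B ^ 2 / 4 * r ^ 2 * s in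
  L ^ 2 * La * (B ^ 2 / 4 * r ^ 2 * s - 1) / (s * r ^ 3)
  + E ^ 2 * (B ^ 2 * r * s * (1 - 1 / r) + La / r ^ 2) / (2 * La ^ 3 * (1 - 1 / r) ^ 2).

Definition G1 (B L E r s : R) : R :=
  let La := 1 + B ^ 2 / 4 * r ^ 2 * s in
  L ^ 2 * La * (B ^ 2 / 4 * r ^ 2 * s - 1) / (2 * r ^ 2 * s ^ 2)
  + E ^ 2 * (B ^ 2 / 4) * r ^ 2 / (La ^ 3 * (1 - 1 / r)).

Lemma La_pos B r s : 0 <= s -> 1 <= 1 + B ^ 2 / 4 * r ^ 2 * s.
Proof.
intros hs. assert (0 <= B ^ 2 / 4 * r ^ 2 * s).
{ apply Rmult_le_pos; auto. apply Rmult_le_pos. 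
  - unfold Rdiv; apply Rmult_le_pos; [apply pow2_ge_0| lra].
  - apply pow2_ge_0. }
lra.
Qed.

Ltac kill_zero H := match type of H with
 | ?a * ?b = 0 => apply Rmult_integral in H; destruct H as [H|H]; kill_zero H
 | _ => idtac end.
Ltac nzs := repeat split; try (let Hc := fresh in intro Hc; kill_zero Hc; try lra; try nra).

Lemma inv_facts r : 1 < r -> 0 < / r < 1.
Proof. intros h. split. apply Rinv_0_lt_compat; lra. rewrite <- Rinv_1. apply Rinv_lt_contravar; lra. Qed.

Lemma Fr_ok B L E r s : 1 < r -> 0 < s -> is_derive (fun y => Vs B L E y s) r (Fr B L E r s).
Proof.
intros hr hs. pose proof (La_pos B r s (Rlt_le _ _ hs)).
pose proof (inv_facts r hr). simpl in H.
unfold Vs, Fr, Gam. auto_derive. nzs.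
simpl. field. nzs.
Qed.

Lemma G1_ok B L E r s : 1 < r -> 0 < s -> is_derive (fun t => Vs B L E r t) s (G1 B L E r s).
Proof.
intros hr hs. pose proof (La_pos B r s (Rlt_le _ _ hs)).
pose proof (inv_facts r hr). simpl in H.
unfold Vs, G1, Gam. auto_derive. nzs.
simpl. field. nzs.
Qed.

Lemma sin2_der y : is_derive (fun x => sin x ^ 2) y (2 * sin y * cos y).
Proof. auto_derive; auto. ring. Qed.

Lemma Veff_dth B L E r y : 1 < r -> sin y <> 0 ->
  is_derive (fun x => Veff B L E r x) y (2 * sin y * cos y * G1 B L E r (sin y ^ 2)).
Proof.
intros hr hy.
assert (hs : 0 < sin y ^ 2) by (apply pow2_gt_0; auto).
exact (is_derive_comp (fun t => Vs B L E r t) (fun x => sin x ^ 2) y _ _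
   (G1_ok B L E r (sin y ^ 2) hr hs) (sin2_der y)).
Qed.

Lemma u_bound B r : 1 < r -> 0 < Zf B r -> B^2 * r^2 < 4/3 /\ 3/2 < r.
Proof.
intros h1 h2. unfold Zf in h2.
assert (0 <= B^2 * r^2) by (apply Rmult_le_pos; apply pow2_ge_0).
split; nra.
Qed.

Lemma Lc2 B rc : 1 < rc -> 0 < Zf B rc ->
  Lc B rc ^ 2 = rc^2 / bf B rc ^ 2 * ((4 * (bf B rc - 1) * (rc - 1) + bf B rc) / Zf B rc).
Proof.
intros h1 h2. unfold Lc.
assert (hb : 1 <= bf B rc) by (unfold bf; pose proof (La_pos B rc 1); lra).
rewrite Rpow_mult_distr. rewrite pow2_sqrt.
- field. lra.
- apply Rmult_le_pos. nra. left; apply Rinv_0_lt_compat; auto.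
Qed.

Lemma Ec2 B rc : 1 < rc -> 0 < Zf B rc ->
  Ec B rc ^ 2 = bf B rc ^ 2 * (rc - 1) ^ 2 * ((4 - B ^ 2 * rc ^ 2) / (2 * rc * Zf B rc)).
Proof.
intros h1 h2. unfold Ec. destruct (u_bound B rc h1 h2).
rewrite Rpow_mult_distr. rewrite pow2_sqrt. rewrite !Rpow_mult_distr. reflexivity.
apply Rmult_le_pos. lra. left; apply Rinv_0_lt_compat. nra.
Qed.

Lemma Fr_zero B rc : 1 < rc -> 0 < Zf B rc -> Fr B (Lc B rc) (Ec B rc) rc 1 = 0.
Proof.
intros h1 h2. destruct (u_bound B rc h1 h2).
unfold Fr. rewrite Lc2 // Ec2 //.
pose proof (inv_facts rc h1). pose proof (La_pos B rc 1 ltac:(lra)).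
unfold bf. unfold Zf in *. simpl in *. field. nzs.
Qed.

Lemma G1_val B rc : 1 < rc -> 0 < Zf B rc ->
  -2 * G1 B (Lc B rc) (Ec B rc) rc 1 = (2 - bf B rc) / Zf B rc.
Proof.
intros h1 h2. destruct (u_bound B rc h1 h2).
unfold G1. rewrite Lc2 // Ec2 //.
pose proof (inv_facts rc h1). pose proof (La_pos B rc 1 ltac:(lra)).
unfold bf. unfold Zf in *. simpl in *. field. nzs.
Qed.

Lemma Frr_val B rc : 1 < rc -> 0 < Zf B rc ->
  is_derive (fun x => Fr B (Lc B rc) (Ec B rc) x 1) rc
    (Nf B rc / (64 * rc ^ 2 * (rc - 1) * bf B rc ^ 2 * Zf B rc)).
Proof.
intros h1 h2. destruct (u_bound B rc h1 h2).
unfold Fr. rewrite Lc2 // Ec2 //.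
pose proof (inv_facts rc h1). pose proof (La_pos B rc 1 ltac:(lra)).
unfold bf, Nf. unfold Zf in *. simpl in *.
auto_derive. nzs.
field. nzs.
Qed.


Lemma inord_neq (a b : nat) : (a < 4)%N -> (b < 4)%N -> a <> b -> (inord a : 'I_4) != inord b.
Proof.
move=> ha hb hab. apply/eqP => /(congr1 val). rewrite /= !inordK //. 
Qed.

Lemma upd_same w i x : upd w i x i = x.
Proof. by rewrite /upd eqxx. Qed.
Lemma upd_diff w i j x : j != i -> upd w i x j = w j.
Proof. by move=> h; rewrite /upd (negbTE h). Qed.

Lemma ep0 rc : eq_point rc (inord 0) = 0.
Proof. rewrite /eq_point !(negbTE (inord_neq _ _ _ _ _)) //. Qed.
Lemma ep1 rc : eq_point rc (inord 1) = 0.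
Proof. rewrite /eq_point !(negbTE (inord_neq _ _ _ _ _)) //. Qed.
Lemma ep2 rc : eq_point rc (inord 2) = rc.
Proof. by rewrite /eq_point eqxx. Qed.
Lemma ep3 rc : eq_point rc (inord 3) = PI / 2.
Proof. rewrite /eq_point (negbTE (inord_neq _ _ _ _ _)) // eqxx //. Qed.

Ltac simpl_upd := repeat (rewrite upd_same || (rewrite upd_diff; [|by apply inord_neq])).
Ltac simpl_ep := rewrite ?ep0 ?ep1 ?ep2 ?ep3.

Definition Pf B r th := Gam r / (2 * (Lam B r th) ^ 2).
Definition Qf B r th := / (2 * r ^ 2 * (Lam B r th) ^ 2).
Definition HH B L E pr pth r th := pr ^ 2 * Pf B r th + pth ^ 2 * Qf B r th + Veff B L E r th.

Lemma Ham_HH B L E w : Ham B L E w =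
  HH B L E (w (inord 0)) (w (inord 1)) (w (inord 2)) (w (inord 3)).
Proof. rewrite /Ham /HH /Pf /Qf /Veff. unfold Rdiv. ring. Qed.

Lemma pderivE i F w : pderiv i F w = Derive (fun x => F (upd w i x)) (w i).
Proof. reflexivity. Qed.

Lemma pd0 B L E w : pderiv (inord 0) (Ham B L E) w =
  2 * w (inord 0) * Pf B (w (inord 2)) (w (inord 3)).
Proof.
rewrite pderivE.
rewrite (Derive_ext _ (fun x => x ^ 2 * Pf B (w (inord 2)) (w (inord 3)) +
   ((w (inord 1)) ^ 2 * Qf B (w (inord 2)) (w (inord 3)) + Veff B L E (w (inord 2)) (w (inord 3))))).
- apply is_derive_unique. auto_derive; auto. ring.
- intro t. rewrite Ham_HH. simpl_upd. rewrite /HH. ring.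
Qed.

Lemma pd1 B L E w : pderiv (inord 1) (Ham B L E) w =
  2 * w (inord 1) * Qf B (w (inord 2)) (w (inord 3)).
Proof.
rewrite pderivE.
rewrite (Derive_ext _ (fun x => x ^ 2 * Qf B (w (inord 2)) (w (inord 3)) +
   ((w (inord 0)) ^ 2 * Pf B (w (inord 2)) (w (inord 3)) + Veff B L E (w (inord 2)) (w (inord 3))))).
- apply is_derive_unique. auto_derive; auto. ring.
- intro t. rewrite Ham_HH. simpl_upd. rewrite /HH. ring.
Qed.

Lemma pd2 B L E w : pderiv (inord 2) (Ham B L E) w =
  Derive (fun y => HH B L E (w (inord 0)) (w (inord 1)) y (w (inord 3))) (w (inord 2)).
Proof.
rewrite pderivE. apply Derive_ext. intro t. rewrite Ham_HH. simpl_upd. reflexivity.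
Qed.

Lemma pd3 B L E w : pderiv (inord 3) (Ham B L E) w =
  Derive (fun y => HH B L E (w (inord 0)) (w (inord 1)) (w (inord 2)) y) (w (inord 3)).
Proof.
rewrite pderivE. apply Derive_ext. intro t. rewrite Ham_HH. simpl_upd. reflexivity.
Qed.

Lemma Lam_ge1 B r th : 1 <= Lam B r th.
Proof. unfold Lam. apply La_pos. apply pow2_ge_0. Qed.

Lemma DHH_r B L E a c r th : 1 < r -> sin th <> 0 ->
  Derive (fun y => HH B L E a c y th) r =
  a ^ 2 * Derive (fun y => Pf B y th) r + c ^ 2 * Derive (fun y => Qf B y th) r
  + Fr B L E r (sin th ^ 2).
Proof.
intros hr hs.
pose proof (inv_facts r hr) as hi.
pose proof (Lam_ge1 B r th) as hl. unfold Lam in hl. simpl in hl.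
assert (hs2 : 0 < sin th * (sin th * 1)) by (pose proof (pow2_gt_0 _ hs); simpl in *; lra).
assert (eP : ex_derive (fun y => Pf B y th) r).
{ unfold Pf, Lam, Gam. auto_derive. nzs. }
assert (eQ : ex_derive (fun y => Qf B y th) r).
{ unfold Qf, Lam. auto_derive. nzs. }
assert (eV : is_derive (fun y => Veff B L E y th) r (Fr B L E r (sin th ^ 2))).
{ apply (Fr_ok B L E r (sin th ^ 2) hr). apply pow2_gt_0; auto. }
unfold HH.
rewrite Derive_plus.
- rewrite Derive_plus.
  + rewrite !Derive_scal. rewrite (is_derive_unique _ _ _ eV). reflexivity.
  + apply ex_derive_scal; auto.
  + apply ex_derive_scal; auto.
- apply: ex_derive_plus; apply ex_derive_scal; auto.
- eexists; exact eV.
Qed.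

Lemma DHH_th B L E a c r th : 1 < r -> sin th <> 0 ->
  Derive (fun y => HH B L E a c r y) th =
  a ^ 2 * Derive (fun y => Pf B r y) th + c ^ 2 * Derive (fun y => Qf B r y) th
  + 2 * sin th * cos th * G1 B L E r (sin th ^ 2).
Proof.
intros hr hs.
pose proof (inv_facts r hr) as hi.
pose proof (Lam_ge1 B r th) as hl. unfold Lam in hl. simpl in hl.
assert (hs2 : 0 < sin th * (sin th * 1)) by (pose proof (pow2_gt_0 _ hs); simpl in *; lra).
assert (eP : ex_derive (fun y => Pf B r y) th).
{ unfold Pf, Lam, Gam. auto_derive. nzs. }
assert (eQ : ex_derive (fun y => Qf B r y) th).
{ unfold Qf, Lam. auto_derive. nzs. }
assert (eV := Veff_dth B L E r th hr hs).
unfold HH.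
rewrite Derive_plus.
- rewrite Derive_plus.
  + rewrite !Derive_scal. rewrite (is_derive_unique _ _ _ eV). reflexivity.
  + apply ex_derive_scal; auto.
  + apply ex_derive_scal; auto.
- apply: ex_derive_plus; apply ex_derive_scal; auto.
- eexists; exact eV.
Qed.

Lemma Z1 i F w : (forall x, F (upd w i x) = 0) -> pderiv i F w = 0.
Proof.
intro h. rewrite pderivE. rewrite (Derive_ext _ (fun _ => 0)); [apply Derive_const|exact h].
Qed.

Lemma Z2 i F w : (exists d, 0 < d /\ forall x, Rabs (x - w i) < d -> F (upd w i x) = 0) ->
  pderiv i F w = 0.
Proof.
intros [d [hd h]]. rewrite pderivE.
rewrite (Derive_ext_loc _ (fun _ => 0)); [apply Derive_const|].
exists (mkposreal d hd). intros y hy. apply h. exact hy.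
Qed.

Lemma Qlem i F w a c : w i = 0 -> (forall x, F (upd w i x) = x ^ 2 * a + c) -> pderiv i F w = 0.
Proof.
intros h0 h. rewrite pderivE. rewrite (Derive_ext _ (fun x => x ^ 2 * a + c)); [|exact h].
rewrite h0. apply is_derive_unique. auto_derive; auto. ring.
Qed.

Lemma Loc i F w G : (exists d, 0 < d /\ forall x, Rabs (x - w i) < d -> F (upd w i x) = G x) ->
  pderiv i F w = Derive G (w i).
Proof.
intros [d [hd h]]. rewrite pderivE.
apply Derive_ext_loc.
exists (mkposreal d hd). intros y hy. apply h. exact hy.
Qed.

Lemma sinPI2sq : sin (PI / 2) ^ 2 = 1.
Proof. rewrite sin_PI2. ring. Qed.

Lemma sin_near x : Rabs (x - PI / 2) < 1 -> 0 < sin x.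
Proof.
intro h. apply Rabs_def2 in h. pose proof PI2_1. apply sin_gt_0; lra.
Qed.

Lemma Derive_sin2_comp f : ex_derive f 1 -> Derive (fun x => f (sin x ^ 2)) (PI / 2) = 0.
Proof.
intro h. rewrite Derive_comp.
- rewrite (is_derive_unique _ _ _ (sin2_der _)). rewrite cos_PI2. ring.
- rewrite sinPI2sq. exact h.
- eexists; apply sin2_der.
Qed.

Section Hess.
Variables (B L E rc : R).
Hypothesis hrc : 1 < rc.

Let H := Ham B L E.
Let v := eq_point rc.

Lemma sPI2 : sin (PI / 2) <> 0.
Proof. rewrite sin_PI2. lra. Qed.

Lemma h00 : pderiv (inord 0) (pderiv (inord 0) H) v = 2 * Pf B rc (PI / 2).
Proof.
rewrite pderivE. rewrite (Derive_ext _ (fun x => 2 * x * Pf B rc (PI / 2))).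
- apply is_derive_unique. auto_derive; auto. simpl_ep. ring.
- intro x. rewrite /H pd0. simpl_upd. rewrite /v. simpl_ep. reflexivity.
Qed.

Lemma h11 : pderiv (inord 1) (pderiv (inord 1) H) v = 2 * Qf B rc (PI / 2).
Proof.
rewrite pderivE. rewrite (Derive_ext _ (fun x => 2 * x * Qf B rc (PI / 2))).
- apply is_derive_unique. auto_derive; auto. simpl_ep. ring.
- intro x. rewrite /H pd1. simpl_upd. rewrite /v. simpl_ep. reflexivity.
Qed.

Lemma hi0 i : (i < 4)%N -> i <> 0%N -> pderiv (inord i) (pderiv (inord 0) H) v = 0.
Proof.
intros hi hi0. apply Z1. intro x. rewrite /H pd0.
rewrite upd_diff; [|apply inord_neq; auto].
rewrite /v ep0. ring.
Qed.

Lemma hi1 i : (i < 4)%N -> i <> 1%N -> pderiv (inord i) (pderiv (inord 1) H) v = 0.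
Proof.
intros hi hi0. apply Z1. intro x. rewrite /H pd1.
rewrite (upd_diff _ _ (inord 1)); [|apply inord_neq; auto].
rewrite /v ep1. ring.
Qed.

Lemma h02 : pderiv (inord 0) (pderiv (inord 2) H) v = 0.
Proof.
apply (Qlem _ _ _ (Derive (fun y => Pf B y (PI / 2)) rc)
   (0 ^ 2 * Derive (fun y => Qf B y (PI / 2)) rc + Fr B L E rc 1)).
- rewrite /v ep0. reflexivity.
- intro x. rewrite /H pd2. simpl_upd. rewrite /v. simpl_ep.
  rewrite DHH_r //; [|apply sPI2]. rewrite sinPI2sq. ring.
Qed.

Lemma h12 : pderiv (inord 1) (pderiv (inord 2) H) v = 0.
Proof.
apply (Qlem _ _ _ (Derive (fun y => Qf B y (PI / 2)) rc)
   (0 ^ 2 * Derive (fun y => Pf B y (PI / 2)) rc + Fr B L E rc 1)).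
- rewrite /v ep1. reflexivity.
- intro x. rewrite /H pd2. simpl_upd. rewrite /v. simpl_ep.
  rewrite DHH_r //; [|apply sPI2]. rewrite sinPI2sq. ring.
Qed.

Lemma h03 : pderiv (inord 0) (pderiv (inord 3) H) v = 0.
Proof.
apply (Qlem _ _ _ (Derive (fun y => Pf B rc y) (PI / 2))
   (0 ^ 2 * Derive (fun y => Qf B rc y) (PI / 2) +
    2 * sin (PI / 2) * cos (PI / 2) * G1 B L E rc (sin (PI / 2) ^ 2))).
- rewrite /v ep0. reflexivity.
- intro x. rewrite /H pd3. simpl_upd. rewrite /v. simpl_ep.
  rewrite DHH_th //; [|apply sPI2]. ring.
Qed.

Lemma h13 : pderiv (inord 1) (pderiv (inord 3) H) v = 0.
Proof.
apply (Qlem _ _ _ (Derive (fun y => Qf B rc y) (PI / 2))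
   (0 ^ 2 * Derive (fun y => Pf B rc y) (PI / 2) +
    2 * sin (PI / 2) * cos (PI / 2) * G1 B L E rc (sin (PI / 2) ^ 2))).
- rewrite /v ep1. reflexivity.
- intro x. rewrite /H pd3. simpl_upd. rewrite /v. simpl_ep.
  rewrite DHH_th //; [|apply sPI2]. ring.
Qed.

Lemma h22 : pderiv (inord 2) (pderiv (inord 2) H) v = Derive (fun x => Fr B L E x 1) rc.
Proof.
rewrite (Loc _ _ _ (fun x => Fr B L E x 1)).
- rewrite /v ep2. reflexivity.
- exists (rc - 1). split; [lra|]. intros x hx. rewrite /v ep2 in hx.
  apply Rabs_def2 in hx.
  rewrite /H pd2. simpl_upd. rewrite /v. simpl_ep.
  rewrite DHH_r; [|lra|apply sPI2]. rewrite sinPI2sq. ring.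
Qed.

Lemma h32 : pderiv (inord 3) (pderiv (inord 2) H) v = 0.
Proof.
rewrite (Loc _ _ _ (fun x => Fr B L E rc (sin x ^ 2))).
- rewrite /v ep3. apply Derive_sin2_comp.
  pose proof (inv_facts rc hrc). pose proof (La_pos B rc 1 ltac:(lra)). simpl in *.
  unfold Fr. auto_derive. nzs.
- exists 1. split; [lra|]. intros x hx. rewrite /v ep3 in hx.
  pose proof (sin_near x hx).
  rewrite /H pd2. simpl_upd. rewrite /v. simpl_ep.
  rewrite DHH_r; [|lra|lra]. ring.
Qed.

Lemma h23 : pderiv (inord 2) (pderiv (inord 3) H) v = 0.
Proof.
apply Z2. exists (rc - 1). split; [lra|]. intros x hx. rewrite /v ep2 in hx.
apply Rabs_def2 in hx.
rewrite /H pd3. simpl_upd. rewrite /v. simpl_ep.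
rewrite DHH_th; [|lra|apply sPI2]. rewrite cos_PI2. ring.
Qed.

Lemma D33 : Derive (fun x => 2 * sin x * cos x * G1 B L E rc (sin x ^ 2)) (PI / 2)
   = -2 * G1 B L E rc 1.
Proof.
assert (eG : ex_derive (fun s => G1 B L E rc s) 1).
{ pose proof (inv_facts rc hrc). pose proof (La_pos B rc 1 ltac:(lra)). simpl in *.
  unfold G1. auto_derive. nzs. }
rewrite Derive_mult.
- rewrite (is_derive_unique (fun x => 2 * sin x * cos x) (PI / 2) (-2)).
  + rewrite cos_PI2 sinPI2sq. ring.
  + auto_derive; auto. rewrite cos_PI2 sin_PI2. ring.
- auto_derive; auto.
- apply (ex_derive_comp (fun s => G1 B L E rc s) (fun x => sin x ^ 2)).
  + rewrite sinPI2sq. exact eG.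
  + eexists; apply sin2_der.
Qed.

Lemma h33 : pderiv (inord 3) (pderiv (inord 3) H) v = -2 * G1 B L E rc 1.
Proof.
rewrite (Loc _ _ _ (fun x => 2 * sin x * cos x * G1 B L E rc (sin x ^ 2))).
- rewrite /v ep3. apply D33.
- exists 1. split; [lra|]. intros x hx. rewrite /v ep3 in hx.
  pose proof (sin_near x hx).
  rewrite /H pd3. simpl_upd. rewrite /v. simpl_ep.
  rewrite DHH_th; [|lra|lra]. ring.
Qed.

Lemma fp0 : pderiv (inord 0) H v = 0.
Proof. rewrite /H pd0 /v ep0. ring. Qed.
Lemma fp1 : pderiv (inord 1) H v = 0.
Proof. rewrite /H pd1 /v ep1. ring. Qed.
Lemma fp2 : pderiv (inord 2) H v = Fr B L E rc 1.
Proof.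
rewrite /H pd2 /v. simpl_ep. rewrite DHH_r //; [|apply sPI2]. rewrite sinPI2sq. ring.
Qed.
Lemma fp3 : pderiv (inord 3) H v = 0.
Proof.
rewrite /H pd3 /v. simpl_ep. rewrite DHH_th //; [|apply sPI2]. rewrite cos_PI2. ring.
Qed.

End Hess.


Definition d4 (a1 a2 c1 c2 : R) (i j : nat) : R :=
  match i, j with 0, 0 => a1 | 1, 1 => a2 | 2, 2 => c1 | 3, 3 => c2 | _, _ => 0 end.

Lemma hessE B L E rc (k j : 'I_4) : 1 < rc ->
  pderiv k (pderiv j (Ham B L E)) (eq_point rc) =
  d4 (2 * Pf B rc (PI / 2)) (2 * Qf B rc (PI / 2)) (Derive (fun x => Fr B L E x 1) rc)
     (-2 * G1 B L E rc 1) k j.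
Proof.
move=> hrc.
case: k => k hk; case: j => j hj.
rewrite -[Ordinal hk]inord_val -[Ordinal hj]inord_val /=.
move: hk hj; case: k => [|[|[|[|k]]]] hk; case: j => [|[|[|[|j]]]] hj //=.
all: rewrite ?inordK //=.
- exact: h00.
- exact: hi1.
- exact: h02.
- exact: h03.
- exact: hi0.
- exact: h11.
- exact: h12.
- exact: h13.
- exact: hi0.
- exact: hi1.
- exact: h22.
- exact: h23.
- exact: hi0.
- exact: hi1.
- exact: h32.
- exact: h33.
Qed.

Definition f4 (a1 a2 c1 c2 : R) (i j : nat) : R :=
  match i, j with
  | 0, 2 => - c1 | 1, 3 => - c2 | 2, 0 => a1 | 3, 1 => a2 | _, _ => 0 end.

Definition M4 (a1 a2 c1 c2 : R) : 'M[R]_4 := \matrix_(i < 4, j < 4) f4 a1 a2 c1 c2 i j.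

Lemma linE B L E rc : 1 < rc ->
  linearization (Ham B L E) (eq_point rc) =
  M4 (2 * Pf B rc (PI / 2)) (2 * Qf B rc (PI / 2))
      (Derive (fun x => Fr B L E x 1) rc) (-2 * G1 B L E rc 1).
Proof.
move=> hrc. rewrite /linearization /hessian. apply/matrixP => i j. rewrite /M4 !mxE.
rewrite !big_ord_recl big_ord0 !mxE. rewrite !hessE //.
case: i => [[|[|[|[|i]]]] hi] //; case: j => [[|[|[|[|j]]]] hj] //=.
all: rewrite -?RplusE -?RmultE -?RoppE -?R0E -?R1E; ring.
Qed.

Module CPm.
From mathcomp Require Import ring.
Import GRing.Theory.
Local Open Scope ring_scope.
Lemma cpM4 (a1 a2 c1 c2 : R) :
  char_poly (M4 a1 a2 c1 c2) = ('X^2 + (a1 * c1)%:P) * ('X^2 + (a2 * c2)%:P).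
Proof.
rewrite /char_poly /char_poly_mx /M4.
repeat (rewrite (expand_det_row _ ord0) !big_ord_recl big_ord0 /cofactor !mxE /=;
      rewrite ?RoppE ?R0E ?mulr0n ?mulr1n ?polyC0 ?subr0 ?sub0r ?mul0r ?mulr0 ?add0r ?addr0).
rewrite ?det_mx00 !polyCN !polyCM.
ring.
Qed.
End CPm.



Definition Kf B r := B ^ 2 / 4 * r ^ 2.
Definition Gs B L E r s :=
  L ^ 2 * (1 / s - Kf B r ^ 2) / (2 * r ^ 2)
  - E ^ 2 * Kf B r * ((1 + Kf B r) + (1 + Kf B r * s)) /
      (2 * Gam r * (1 + Kf B r * s) ^ 2 * (1 + Kf B r) ^ 2).
Definition mf B E r := 3 * E ^ 2 * Kf B r ^ 2 / (2 * Gam r * (1 + Kf B r) ^ 2).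

Lemma K_nonneg B r : 0 <= Kf B r.
Proof. unfold Kf. pose proof (La_pos B r 1 ltac:(lra)). lra. Qed.

Lemma Gs_split B L E r s : 1 < r -> 0 < s ->
  Vs B L E r s - Vs B L E r 1 = (1 - s) * Gs B L E r s.
Proof.
intros hr hs. pose proof (K_nonneg B r). pose proof (inv_facts r hr).
assert (0 <= Kf B r * s) by (apply Rmult_le_pos; lra).
unfold Vs, Gs, Gam. fold (Kf B r).
replace (B ^ 2 / 4 * r ^ 2 * s) with (Kf B r * s) by (unfold Kf; ring).
replace (B ^ 2 / 4 * r ^ 2 * 1) with (Kf B r) by (unfold Kf; ring).
field. nzs.
Qed.

Lemma Gs_lower B L E r s : 1 < r -> 0 < s -> s <= 1 ->
  - G1 B L E r 1 - (1 - s) * mf B E r <= Gs B L E r s.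
Proof.
intros hr hs hs1. pose proof (K_nonneg B r) as hK. pose proof (inv_facts r hr).
assert (hKs : 0 <= Kf B r * s) by (apply Rmult_le_pos; lra).
assert (hLab : Kf B r * s <= Kf B r) by nra.
assert (hG : 0 < Gam r) by (unfold Gam; lra).
assert (e : Gs B L E r s - (- G1 B L E r 1 - (1 - s) * mf B E r) =
  L ^ 2 * (1 / s - 1) / (2 * r ^ 2) +
  E ^ 2 * Kf B r ^ 2 * (1 - s) / (2 * Gam r * (1 + Kf B r) ^ 2) *
     (3 - ((1 + Kf B r) + 2 * (1 + Kf B r * s)) / ((1 + Kf B r) * (1 + Kf B r * s) ^ 2))).
{ unfold Gs, G1, mf. unfold Kf in *. unfold Gam in *.
  field. nzs. }
assert (t1 : 0 <= L ^ 2 * (1 / s - 1) / (2 * r ^ 2)).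
{ apply Rmult_le_pos; [apply Rmult_le_pos; [apply pow2_ge_0|] |].
  - assert (1 <= 1 / s). { apply (Rmult_le_reg_r s); auto. field_simplify; lra. } lra.
  - left; apply Rinv_0_lt_compat. nra. }
assert (t2 : 0 <= 3 - ((1 + Kf B r) + 2 * (1 + Kf B r * s)) / ((1 + Kf B r) * (1 + Kf B r * s) ^ 2)).
{ assert (((1 + Kf B r) + 2 * (1 + Kf B r * s)) / ((1 + Kf B r) * (1 + Kf B r * s) ^ 2) <= 3).
  { apply (Rmult_le_reg_r ((1 + Kf B r) * (1 + Kf B r * s) ^ 2)). nra.
    field_simplify; [|nra]. nra. }
  lra. }
assert (t3 : 0 <= E ^ 2 * Kf B r ^ 2 * (1 - s) / (2 * Gam r * (1 + Kf B r) ^ 2)).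
{ apply Rmult_le_pos; [apply Rmult_le_pos; [apply Rmult_le_pos; apply pow2_ge_0|lra]|].
  left; apply Rinv_0_lt_compat. nra. }
nra.
Qed.

Lemma cont_eps f x : continuity_pt f x -> forall eps, 0 < eps ->
  exists d, 0 < d /\ forall y, Rabs (y - x) < d -> Rabs (f y - f x) < eps.
Proof.
intros h eps he. destruct (h eps he) as [d [hd hh]]. exists d. split; auto.
intros y hy. destruct (Req_dec y x) as [e|ne].
- subst. rewrite Rminus_eq_0 Rabs_R0. auto.
- apply hh. split; [split; [exact I| auto] | exact hy].
Qed.

Lemma deriv_cont f x l : is_derive f x l -> continuity_pt f x.
Proof.
intro h. apply is_derive_Reals in h. apply derivable_continuous_pt. exists l. exact h.
Qed.

Lemma strict_min_1d (phi F : R -> R) rc a c : a < rc -> 0 < c ->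
  (forall r, a < r -> derivable_pt_lim phi r (F r)) -> F rc = 0 ->
  derivable_pt_lim F rc c ->
  exists d, 0 < d /\ forall r, Rabs (r - rc) < d -> r <> rc -> phi rc < phi r.
Proof.
intros ha hc hphi hF0 hF.
destruct (hF (c / 2) ltac:(lra)) as [del hdel].
assert (key : forall x, x <> rc -> Rabs (x - rc) < del -> 0 < F x / (x - rc)).
{ intros x hx hx2. assert (hh : x - rc <> 0) by lra.
  pose proof (hdel (x - rc) hh hx2) as q.
  replace (rc + (x - rc)) with x in q by ring. rewrite hF0 in q.
  replace ((F x - 0) / (x - rc)) with (F x / (x - rc)) in q by (field; auto).
  apply Rabs_def2 in q. lra. }
exists (Rmin del (rc - a)). split.
{ apply Rmin_pos; [apply cond_pos| lra]. }
intros r hr hne.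
assert (hr1 : Rabs (r - rc) < del) by (eapply Rlt_le_trans; [exact hr| apply Rmin_l]).
assert (hr2 : Rabs (r - rc) < rc - a) by (eapply Rlt_le_trans; [exact hr| apply Rmin_r]).
apply Rabs_def2 in hr1. apply Rabs_def2 in hr2.
destruct (Rlt_or_le rc r) as [hlt|hle].
- destruct (MVT_cor2 phi F rc r hlt) as [xi [e1 e2]].
  { intros x hx. apply hphi. lra. }
  assert (q : 0 < F xi / (xi - rc)) by (apply key; [lra| apply Rabs_def1; lra]).
  assert (0 < F xi).
  { replace (F xi) with (F xi / (xi - rc) * (xi - rc)) by (field; lra). nra. }
  nra.
- assert (hlt : r < rc) by lra.
  destruct (MVT_cor2 phi F r rc hlt) as [xi [e1 e2]].
  { intros x hx. apply hphi. lra. }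
  assert (q : 0 < F xi / (xi - rc)) by (apply key; [lra| apply Rabs_def1; lra]).
  assert (F xi < 0).
  { replace (F xi) with (F xi / (xi - rc) * (xi - rc)) by (field; lra). nra. }
  nra.
Qed.

Lemma cos_nz th : Rabs (th - PI / 2) < 1 -> th <> PI / 2 -> cos th <> 0.
Proof.
intros h hne. apply Rabs_def2 in h. pose proof PI2_1.
rewrite <- sin_shift.
destruct (Rlt_or_le th (PI/2)) as [hl|hl].
- apply Rgt_not_eq. apply sin_gt_0; lra.
- assert (hl' : PI / 2 < th) by lra.
  replace (PI / 2 - th) with (- (th - PI / 2)) by ring. rewrite sin_neg.
  assert (0 < sin (th - PI / 2)) by (apply sin_gt_0; lra). lra.
Qed.

Lemma sin2_eq th : sin th ^ 2 = 1 - cos th ^ 2.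
Proof. pose proof (sin2_cos2 th). unfold Rsqr in H. simpl. lra. Qed.

Lemma local_min B rc : 1 < rc -> 0 < Zf B rc -> 0 < Nf B rc ->
  strict_local_min (Veff B (Lc B rc) (Ec B rc)) rc (PI / 2).
Proof.
intros h1 hZ hN.
set (L := Lc B rc). set (E := Ec B rc).
destruct (u_bound B rc h1 hZ) as [hu hr32].
set (c := Nf B rc / (64 * rc ^ 2 * (rc - 1) * bf B rc ^ 2 * Zf B rc)).
assert (hb : 1 <= bf B rc) by (unfold bf; pose proof (La_pos B rc 1); lra).
assert (hc : 0 < c).
{ unfold c. apply Rdiv_lt_0_compat; auto.
  repeat apply Rmult_lt_0_compat; try lra; try (apply pow_lt; lra). }
destruct (strict_min_1d (fun r => Veff B L E r (PI / 2)) (fun r => Fr B L E r 1) rc 1 c h1 hc)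
  as [d1 [hd1 hmin1]].
{ intros r hr. apply is_derive_Reals.
  eapply is_derive_ext; [| apply (Fr_ok B L E r 1 hr ltac:(lra))].
  intro t. rewrite Veff_Vs sinPI2sq. reflexivity. }
{ apply Fr_zero; auto. }
{ apply is_derive_Reals. apply Frr_val; auto. }
set (g := - G1 B L E rc 1).
assert (hg : 0 < g).
{ unfold g. pose proof (G1_val B rc h1 hZ) as e. fold L E in e.
  assert (0 < (2 - bf B rc) / Zf B rc).
  { apply Rdiv_lt_0_compat; auto. unfold bf. lra. }
  lra. }
assert (cG : continuity_pt (fun r => - G1 B L E r 1) rc).
{ pose proof (inv_facts rc h1). pose proof (La_pos B rc 1 ltac:(lra)). simpl in *.
  assert (ex : ex_derive (fun r => - G1 B L E r 1) rc).
  { unfold G1. auto_derive. nzs. }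
  destruct ex as [l hl]. exact (deriv_cont _ _ _ hl). }
destruct (cont_eps _ _ cG (g / 2) ltac:(lra)) as [d2 [hd2 hG2]].
set (M := mf B E rc + 1).
assert (hM : 0 < M).
{ unfold M, mf. pose proof (K_nonneg B rc). pose proof (inv_facts rc h1).
  assert (0 <= 3 * E ^ 2 * Kf B rc ^ 2 / (2 * Gam rc * (1 + Kf B rc) ^ 2)).
  { apply Rmult_le_pos. apply Rmult_le_pos. apply Rmult_le_pos. lra. apply pow2_ge_0.
    apply pow2_ge_0. left. apply Rinv_0_lt_compat. unfold Gam. 
    apply Rmult_lt_0_compat. lra. apply pow_lt. lra. }
  lra. }
assert (cM : continuity_pt (fun r => mf B E r) rc).
{ pose proof (inv_facts rc h1). pose proof (La_pos B rc 1 ltac:(lra)). simpl in *.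
  assert (ex : ex_derive (fun r => mf B E r) rc).
  { unfold mf, Kf, Gam. auto_derive. nzs. }
  destruct ex as [l hl]. exact (deriv_cont _ _ _ hl). }
destruct (cont_eps _ _ cM 1 ltac:(lra)) as [d3 [hd3 hM3]].
assert (cS : continuity_pt (fun th => sin th ^ 2) (PI / 2)).
{ exact (deriv_cont _ _ _ (sin2_der _)). }
destruct (cont_eps _ _ cS (g / (2 * M)) ltac:(apply Rdiv_lt_0_compat; lra)) as [d4 [hd4 hS4]].
exists (Rmin (Rmin d1 d2) (Rmin (Rmin d3 d4) (Rmin 1 (rc - 1)))).
split.
{ repeat apply Rmin_pos; lra. }
intros r th hr hth hne.
assert (hr1 : Rabs (r - rc) < d1) by (eapply Rlt_le_trans; [exact hr|];
  eapply Rle_trans; [apply Rmin_l| apply Rmin_l]).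
assert (hr2 : Rabs (r - rc) < d2) by (eapply Rlt_le_trans; [exact hr|];
  eapply Rle_trans; [apply Rmin_l| apply Rmin_r]).
assert (hr3 : Rabs (r - rc) < d3) by (eapply Rlt_le_trans; [exact hr|];
  eapply Rle_trans; [apply Rmin_r| eapply Rle_trans; apply Rmin_l]).
assert (hr5 : Rabs (r - rc) < rc - 1) by (eapply Rlt_le_trans; [exact hr|];
  eapply Rle_trans; [apply Rmin_r| eapply Rle_trans; apply Rmin_r]).
assert (ht4 : Rabs (th - PI / 2) < d4) by (eapply Rlt_le_trans; [exact hth|];
  eapply Rle_trans; [apply Rmin_r| eapply Rle_trans; [apply Rmin_l| apply Rmin_r]]).
assert (ht1 : Rabs (th - PI / 2) < 1) by (eapply Rlt_le_trans; [exact hth|];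
  eapply Rle_trans; [apply Rmin_r| eapply Rle_trans; [apply Rmin_r| apply Rmin_l]]).
assert (hr1' : 1 < r) by (apply Rabs_def2 in hr5; lra).
pose proof (sin_near th ht1) as hsin.
set (s := sin th ^ 2).
assert (hs0 : 0 < s) by (unfold s; apply pow_lt; lra).
assert (hs1 : s <= 1) by (unfold s; rewrite sin2_eq; pose proof (pow2_ge_0 (cos th)); lra).
assert (h1s : 1 - s < g / (2 * M)).
{ pose proof (hS4 th ht4) as q. rewrite sinPI2sq in q. fold s in q.
  apply Rabs_def2 in q. lra. }
assert (hGr : g / 2 < - G1 B L E r 1).
{ pose proof (hG2 r hr2) as q. apply Rabs_def2 in q. fold g in q. lra. }
assert (hMr : mf B E r < M).
{ pose proof (hM3 r hr3) as q. apply Rabs_def2 in q. unfold M. lra. }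
assert (hGs : 0 < Gs B L E r s).
{ pose proof (Gs_lower B L E r s hr1' hs0 hs1).
  assert ((1 - s) * mf B E r <= (1 - s) * M) by (apply Rmult_le_compat_l; lra).
  assert ((1 - s) * M < g / 2).
  { replace (g / 2) with (g / (2 * M) * M) by (field; lra).
    apply Rmult_lt_compat_r; lra. }
  lra. }
assert (esplit : Veff B L E r th - Veff B L E rc (PI / 2) =
  (1 - s) * Gs B L E r s + (Veff B L E r (PI / 2) - Veff B L E rc (PI / 2))).
{ rewrite <- Gs_split; auto. rewrite !Veff_Vs sinPI2sq. fold s. ring. }
destruct (Req_dec r rc) as [er|ner].
- subst r.
  assert (hth' : th <> PI / 2) by (intro e; apply hne; subst th; reflexivity).
  assert (s < 1).
  { unfold s. rewrite sin2_eq. pose proof (cos_nz th ht1 hth').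
    pose proof (pow2_gt_0 _ H). lra. }
  assert (0 < (1 - s) * Gs B L E rc s) by (apply Rmult_lt_0_compat; lra).
  lra.
- pose proof (hmin1 r hr1 ner) as q. simpl in q.
  assert (0 <= (1 - s) * Gs B L E r s) by (apply Rmult_le_pos; lra).
  lra.
Qed.


Lemma fixed_ok B rc : 1 < rc -> 0 < Zf B rc ->
  fixed_point (Ham B (Lc B rc) (Ec B rc)) (eq_point rc).
Proof.
move=> h1 hZ k.
case: k => k hk. rewrite -[Ordinal hk]inord_val /=.
move: hk; case: k => [|[|[|[|k]]]] hk //.
- exact: fp0.
- exact: fp1.
- rewrite fp2 //. exact: Fr_zero.
- exact: fp3.
Qed.

Lemma ham_val B rc : 1 < rc -> 0 < Zf B rc ->
  Ham B (Lc B rc) (Ec B rc) (eq_point rc) = - 1 / 2.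
Proof.
intros h1 hZ. rewrite Ham_HH. simpl_ep. unfold HH. rewrite Veff_Vs sinPI2sq.
unfold Vs. 
replace ((Lc B rc) ^ 2) with (rc^2 / bf B rc ^ 2 * ((4 * (bf B rc - 1) * (rc - 1) + bf B rc) / Zf B rc))
  by (symmetry; apply Lc2; auto).
replace ((Ec B rc) ^ 2) with (bf B rc ^ 2 * (rc - 1) ^ 2 * ((4 - B ^ 2 * rc ^ 2) / (2 * rc * Zf B rc)))
  by (symmetry; apply Ec2; auto).
destruct (u_bound B rc h1 hZ).
pose proof (inv_facts rc h1). pose proof (La_pos B rc 1 ltac:(lra)).
unfold bf, Gam. unfold Zf in *. simpl in *. field. nzs.
Qed.

Section Fin.
Import GRing.Theory.

Definition a1v B rc := 2 * Pf B rc (PI / 2).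
Definition a2v B rc := 2 * Qf B rc (PI / 2).
Definition c1v B rc := Nf B rc / (64 * rc ^ 2 * (rc - 1) * bf B rc ^ 2 * Zf B rc).
Definition c2v B rc := (2 - bf B rc) / Zf B rc.

Lemma lin_cp B rc : 1 < rc -> 0 < Zf B rc ->
  char_poly (linearization (Ham B (Lc B rc) (Ec B rc)) (eq_point rc)) =
  (('X^2 + (a1v B rc * c1v B rc)%:P) * ('X^2 + (a2v B rc * c2v B rc)%:P))%R.
Proof.
intros h1 hZ. rewrite linE // CPm.cpM4.
rewrite (is_derive_unique _ _ _ (Frr_val B rc h1 hZ)).
rewrite (G1_val B rc h1 hZ).
reflexivity.
Qed.

Lemma a_pos B rc : 1 < rc -> 0 < a1v B rc /\ 0 < a2v B rc.
Proof.
intros h1. pose proof (Lam_ge1 B rc (PI / 2)). pose proof (inv_facts rc h1).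
unfold a1v, a2v, Pf, Qf, Gam. split.
- apply Rmult_lt_0_compat; [lra|]. apply Rdiv_lt_0_compat; [lra|].
  apply Rmult_lt_0_compat; [lra| apply pow_lt; lra].
- apply Rmult_lt_0_compat; [lra|]. apply Rinv_0_lt_compat.
  apply Rmult_lt_0_compat; [apply Rmult_lt_0_compat; [lra| apply pow_lt; lra]| apply pow_lt; lra].
Qed.

Lemma c_signs B rc : 1 < rc -> 0 < Zf B rc ->
  0 < c2v B rc /\ (Nf B rc < 0 -> c1v B rc < 0) /\ (0 < Nf B rc -> 0 < c1v B rc).
Proof.
intros h1 hZ. destruct (u_bound B rc h1 hZ).
assert (hb : 1 <= bf B rc) by (unfold bf; pose proof (La_pos B rc 1); lra).
assert (hD : 0 < 64 * rc ^ 2 * (rc - 1) * bf B rc ^ 2 * Zf B rc).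
{ repeat apply Rmult_lt_0_compat; try lra; try (apply pow_lt; lra). }
unfold c1v, c2v. split; [|split].
- apply Rdiv_lt_0_compat; auto. unfold bf. lra.
- intro hN. unfold Rdiv. assert (0 < / (64 * rc ^ 2 * (rc - 1) * bf B rc ^ 2 * Zf B rc))
    by (apply Rinv_0_lt_compat; auto). nra.
- intro hN. apply Rdiv_lt_0_compat; auto.
Qed.

Lemma saddle_ok B rc : 1 < rc -> 0 < Zf B rc -> Nf B rc < 0 ->
  saddle_center (linearization (Ham B (Lc B rc) (Ec B rc)) (eq_point rc)).
Proof.
intros h1 hZ hN.
destruct (a_pos B rc h1) as [ha1 ha2]. destruct (c_signs B rc h1 hZ) as [hc2 [hc1 _]].
specialize (hc1 hN).
assert (hX : 0 < - (a1v B rc * c1v B rc)) by nra.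
assert (hY : 0 < a2v B rc * c2v B rc) by nra.
exists (sqrt (- (a1v B rc * c1v B rc))), (sqrt (a2v B rc * c2v B rc)).
split; [apply sqrt_lt_R0; lra|]. split; [apply sqrt_lt_R0; lra|].
rewrite lin_cp //.
have e1 : ((sqrt (- (a1v B rc * c1v B rc))) ^ 2)%R = - (a1v B rc * c1v B rc)
  := sqrt_sqrt _ (Rlt_le _ _ hX).
have e2 : ((sqrt (a2v B rc * c2v B rc)) ^ 2)%R = a2v B rc * c2v B rc
  := sqrt_sqrt _ (Rlt_le _ _ hY).
rewrite e1 e2. rewrite polyCN opprK. reflexivity.
Qed.

Lemma center_ok B rc : 1 < rc -> 0 < Zf B rc -> 0 < Nf B rc ->
  center_center (linearization (Ham B (Lc B rc) (Ec B rc)) (eq_point rc)).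
Proof.
intros h1 hZ hN.
destruct (a_pos B rc h1) as [ha1 ha2]. destruct (c_signs B rc h1 hZ) as [hc2 [_ hc1]].
specialize (hc1 hN).
assert (hX : 0 < a1v B rc * c1v B rc) by nra.
assert (hY : 0 < a2v B rc * c2v B rc) by nra.
exists (sqrt (a1v B rc * c1v B rc)), (sqrt (a2v B rc * c2v B rc)).
split; [apply sqrt_lt_R0; lra|]. split; [apply sqrt_lt_R0; lra|].
rewrite lin_cp //.
have e1 : ((sqrt (a1v B rc * c1v B rc)) ^ 2)%R = a1v B rc * c1v B rc
  := sqrt_sqrt _ (Rlt_le _ _ hX).
have e2 : ((sqrt (a2v B rc * c2v B rc)) ^ 2)%R = a2v B rc * c2v B rc
  := sqrt_sqrt _ (Rlt_le _ _ hY).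
rewrite e1 e2. reflexivity.
Qed.
End Fin.

Theorem mainTheorem2 (B : R) (hB0 : 0 <= B) (hBn : B < Bn) :
  (forall rc : R, 1 < rc -> 0 < Zf B rc ->
     fixed_point (Ham B (Lc B rc) (Ec B rc)) (eq_point rc) /\
     Ham B (Lc B rc) (Ec B rc) (eq_point rc) = - 1 / 2) /\
  exists (r1 : R) (r2 : Rbar),
    1 <= r1 /\ (B = 0 <-> r2 = p_infty) /\
    (forall r : R, (1 < r /\ 0 < Zf B r) <-> (r1 < r /\ Rbar_lt r r2)) /\
    exists rs : R,
      r1 < rs /\ Rbar_lt rs r2 /\ Nf B rs = 0 /\
      (forall rc : R, r1 < rc -> rc < rs ->
         saddle_center (linearization (Ham B (Lc B rc) (Ec B rc)) (eq_point rc))) /\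
      (forall rc : R, rs < rc -> Rbar_lt rc r2 ->
         center_center (linearization (Ham B (Lc B rc) (Ec B rc)) (eq_point rc)) /\
         strict_local_min (Veff B (Lc B rc) (Ec B rc)) rc (PI / 2)) /\
      (B = 0 -> rs = 3).
Proof.
split.
{ intros rc h1 hZ. split; [apply fixed_ok| apply ham_val]; auto. }
destruct (sign_part B hB0 hBn) as [r1 [r2 [hr1 [hinf [hint [rs [hrs1 [hrs2 [hNs [hlo [hhi h3]]]]]]]]]]].
exists r1. exists r2. split; [exact hr1|]. split; [exact hinf|]. split; [exact hint|].
exists rs. split; [exact hrs1|]. split; [exact hrs2|]. split; [exact hNs|].
split; [|split; [|exact h3]].
- intros rc h1 h2.
  assert (hrc : r1 < rc /\ Rbar_lt rc r2).
  { split; [exact h1|]. apply Rbar_lt_trans with (y := rs); [simpl; exact h2| exact hrs2]. }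
  apply hint in hrc. destruct hrc as [ha hb].
  apply saddle_ok; auto.
- intros rc h1 h2.
  assert (hrc : r1 < rc /\ Rbar_lt rc r2) by (split; [lra| exact h2]).
  apply hint in hrc. destruct hrc as [ha hb].
  pose proof (hhi rc h1 h2).
  split; [apply center_ok| apply local_min]; auto.
Qed.
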